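(* For every $f:\{0,1\}^d\to\{0,1\}$, with $x,y,z$ sampled uniformly and independently from $\{0,1\}^d$, $$\Pr[(x,y)\text{ violates linearity}]\le 3\varepsilon_f,\qquad \Pr[(x,y)\text{ and }(x,z)\text{ both violate linearity}]\le\varepsilon_f+4\varepsilon_f^2.$$
   Context: A pair $(x,y)\in(\{0,1\}^d)^2$ violates linearity (for $f$) if $f(x)+f(y)\neq f(x\oplus y)$ (mod 2), where $\oplus$ is bitwise XOR. $\varepsilon_f$ (distance of $f$ to linearity) is the minimum over linear $g$ of $\Pr_{x\sim\{0,1\}^d}[f(x)\neq g(x)]$, where $g:\{0,1\}^d\to\{0,1\}$ is linear if $g(x)=\sum_{i\in S}x[i]\bmod2$ for some $S\subseteq[d]$. *)

(* Defs.v *)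
From mathcomp Require Import all_boot all_order all_algebra.
Set Implicit Arguments. Unset Strict Implicit. Unset Printing Implicit Defensive.
Import Order.TTheory GRing.Theory Num.Theory.

(* Points of {0,1}^d: finite functions 'I_d -> bool (bool = F_2, addition = xor). *)
Definition cube (d : nat) := {ffun 'I_d -> bool}.

Definition bxor d (x y : cube d) : cube d := [ffun i => x i (+) y i].

Definition linfun_S d (S : {set 'I_d}) (x : cube d) : bool :=
  odd (\sum_(i in S) (x i : nat)).

Definition violates d (f : cube d -> bool) (x y : cube d) : bool :=
  (f x (+) f y) != f (bxor x y).

Local Open Scope ring_scope.

Definition dist_lin d (f : cube d -> bool) (S : {set 'I_d}) : rat :=
  #|[set x : cube d | f x != linfun_S S x]|%:R / (2 ^ d)%:R.

(* eps_f = min over linear g (i.e. over S) of the disagreement probability *)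
Definition eps_lin d (f : cube d -> bool) : rat :=
  \big[Num.min/1]_(S : {set 'I_d}) dist_lin f S.

Definition pr_viol d (f : cube d -> bool) : rat :=
  #|[set p : cube d * cube d | violates f p.1 p.2]|%:R / (2 ^ d * 2 ^ d)%:R.

Definition pr_viol2 d (f : cube d -> bool) : rat :=
  #|[set p : cube d * (cube d * cube d) |
      violates f p.1 p.2.1 && violates f p.1 p.2.2]|%:R
  / (2 ^ d * 2 ^ d * 2 ^ d)%:R.

(* Main.v *)
Require Import Defs.
From mathcomp Require Import all_boot all_order all_algebra.
From mathcomp Require Import ring lra.
Import Order.TTheory GRing.Theory Num.Theory.
Local Open Scope ring_scope.

Section Aux.
Variable d : nat.
Variable f : cube d -> bool.
Local Notation T := (cube d).

Lemma linfun_xor S (x y : T) :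
  linfun_S S (bxor x y) = linfun_S S x (+) linfun_S S y.
Proof.
rewrite /linfun_S !(big_morph odd oddD (id1 := false)) //.
rewrite -big_split /=; apply: eq_bigr => i _; rewrite ffunE.
by case: (x i); case: (y i).
Qed.

Lemma bxorK (x y : T) : bxor x (bxor x y) = y.
Proof. by apply/ffunP => i; rewrite !ffunE addKb. Qed.

Definition AS S := [set x : T | f x != linfun_S S x].

Lemma viol_cover S x y : violates f x y ->
  [|| x \in AS S, y \in AS S | bxor x y \in AS S].
Proof.
rewrite /violates !inE; apply: contraLR.
rewrite !negb_or !negbK => /and3P [/eqP hx /eqP hy /eqP hxy].
by rewrite hx hy hxy linfun_xor eqxx.
Qed.

Lemma cardU3 (U : finType) (A B C : {set U}) :
  (#|A :|: B :|: C| <= #|A| + #|B| + #|C|)%N.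
Proof.
apply: leq_trans (leq_card_setU _ _).1 _.
by rewrite leq_add2r (leq_card_setU _ _).1.
Qed.

Definition bx (b : bool) (x y : T) := if b then bxor x y else y.

Lemma bx_inj b x : injective (bx b x).
Proof. by case: b => y z //= e; rewrite -(bxorK x y) e bxorK. Qed.

Lemma count1 S : (#|[set p : T * T | violates f p.1 p.2]| <= 3 * (#|AS S| * #|T|))%N.
Proof.
set A := AS S.
have c1 : #|[set p : T * T | p.1 \in A]| = (#|A| * #|T|)%N.
  have -> : [set p : T * T | p.1 \in A] = setX A [set: T].
    by apply/setP => p; rewrite !inE andbT.
  by rewrite cardsX cardsT.
have c2 : #|[set p : T * T | p.2 \in A]| = (#|A| * #|T|)%N.
  have -> : [set p : T * T | p.2 \in A] = setX [set: T] A.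
    by apply/setP => p; rewrite !inE.
  by rewrite cardsX cardsT mulnC.
have c3 : #|[set p : T * T | bxor p.1 p.2 \in A]| = (#|A| * #|T|)%N.
  have -> : [set p : T * T | bxor p.1 p.2 \in A] =
     (fun p : T * T => (p.1, bxor p.1 p.2)) @^-1: [set p : T * T | p.2 \in A].
    by apply/setP => p; rewrite !inE.
  rewrite card_preimset ?c2 //.
  by move=> [x y] [x' y'] /= [<-] /(congr1 (bxor x)); rewrite !bxorK => ->.
apply: (@leq_trans #|[set p : T * T | p.1 \in A] :|: [set p : T * T | p.2 \in A]
    :|: [set p : T * T | bxor p.1 p.2 \in A]|).
  apply: subset_leq_card; apply/subsetP => p; rewrite inE => /(viol_cover S).
  by rewrite !inE orbA.
have := cardU3 _ [set p : T * T | p.1 \in A] [set p : T * T | p.2 \in A]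
    [set p : T * T | bxor p.1 p.2 \in A].
by rewrite c1 c2 c3 !mulSn addn0 addnA.
Qed.

Lemma count2 S : (#|[set p : T * (T * T) |
      violates f p.1 p.2.1 && violates f p.1 p.2.2]| <=
   #|AS S| * (#|T| * #|T|) + 4 * (#|T| * (#|AS S| * #|AS S|)))%N.
Proof.
set A := AS S.
set D := fun b c => [set p : T * (T * T) | (bx b p.1 p.2.1 \in A) && (bx c p.1 p.2.2 \in A)].
have cD : forall b c, #|D b c| = (#|T| * (#|A| * #|A|))%N.
  move=> b c.
  have -> : D b c = (fun p : T * (T * T) => (p.1, (bx b p.1 p.2.1, bx c p.1 p.2.2)))
      @^-1: setX [set: T] (setX A A).
    by apply/setP => p; rewrite !inE.
  rewrite card_preimset ?cardsX ?cardsT //.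
  move=> [x [y z]] [x' [y' z']] /= [ex ey ez]; subst x'.
  by move: ey ez => /bx_inj -> /bx_inj ->.
have c0 : #|[set p : T * (T * T) | p.1 \in A]| = (#|A| * (#|T| * #|T|))%N.
  have -> : [set p : T * (T * T) | p.1 \in A] = setX A [set: T * T].
    by apply/setP => p; rewrite !inE andbT.
  by rewrite cardsX cardsT card_prod.
set D0 := [set p : T * (T * T) | p.1 \in A].
have sub : [set p : T * (T * T) | violates f p.1 p.2.1 && violates f p.1 p.2.2]
   \subset D0 :|: (D false false :|: D false true :|: (D true false :|: D true true)).
  apply/subsetP => p; rewrite inE => /andP [/(viol_cover S) h1 /(viol_cover S) h2].
  move: h1 h2; rewrite !inE /bx /=.
  move: (f p.1 != linfun_S S p.1) (f p.2.1 != linfun_S S p.2.1)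
    (f p.2.2 != linfun_S S p.2.2)
    (f (bxor p.1 p.2.1) != linfun_S S (bxor p.1 p.2.1))
    (f (bxor p.1 p.2.2) != linfun_S S (bxor p.1 p.2.2)).
  by do 5 case.
apply: leq_trans (subset_leq_card sub) _.
apply: leq_trans (leq_card_setU _ _).1 _.
rewrite c0 leq_add2l.
apply: leq_trans (leq_card_setU _ _).1 _.
have h : forall (X Y : {set T * (T * T)}), (#|X :|: Y| <= #|X| + #|Y|)%N.
  by move=> X Y; exact: (leq_card_setU _ _).1.
apply: leq_trans (leq_add (h _ _) (h _ _)) _.
by rewrite !cD !mulSn addn0 !addnA.
Qed.

End Aux.

Lemma rat_bound1 (v a N : nat) : (0 < N)%N -> (v <= 3 * (a * N))%N ->
  v%:R / (N * N)%:R <= 3 * ((a%:R : rat) / N%:R).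
Proof.
move=> N0 h.
rewrite ler_pdivrMr ?ltr0n ?muln_gt0 ?N0 //.
have -> : 3 * ((a%:R : rat) / N%:R) * (N * N)%:R = (3 * (a * N))%:R.
  rewrite !natrM; field; by rewrite pnatr_eq0 -lt0n.
by rewrite ler_nat.
Qed.

Lemma rat_bound2 (v a N : nat) : (0 < N)%N ->
  (v <= a * (N * N) + 4 * (N * (a * a)))%N ->
  v%:R / (N * N * N)%:R <= (a%:R : rat) / N%:R + 4 * ((a%:R : rat) / N%:R) ^+ 2.
Proof.
move=> N0 h.
rewrite ler_pdivrMr ?ltr0n ?muln_gt0 ?N0 //.
have -> : ((a%:R : rat) / N%:R + 4 * ((a%:R : rat) / N%:R) ^+ 2) * (N * N * N)%:R
   = (a * (N * N) + 4 * (N * (a * a)))%:R.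
  rewrite !natrM natrD !natrM; field; by rewrite pnatr_eq0 -lt0n.
by rewrite ler_nat.
Qed.

Lemma rat_le1 (v M : nat) : (0 < M)%N -> (v <= M)%N -> (v%:R : rat) / M%:R <= 1.
Proof.
move=> M0 h; rewrite ler_pdivrMr ?ltr0n // mul1r.
by rewrite ler_nat.
Qed.

Theorem claimB3 (d : nat) (f : cube d -> bool) :
  pr_viol f <= 3 * eps_lin f /\
  pr_viol2 f <= eps_lin f + 4 * eps_lin f ^+ 2.
Proof.
have cT : #|cube d| = (2 ^ d)%N by rewrite card_ffun card_bool card_ord.
have N0 : (0 < 2 ^ d)%N by rewrite expn_gt0.
rewrite /eps_lin.
apply: (big_ind (fun e => pr_viol f <= 3 * e /\ pr_viol2 f <= e + 4 * e ^+ 2)).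
- split.
  + apply: le_trans (_ : _ <= 1) _; last by lra.
    rewrite /pr_viol; apply: rat_le1; first by rewrite muln_gt0 N0.
    by rewrite -cT -card_prod; apply: max_card.
  + apply: le_trans (_ : _ <= 1) _; last by lra.
    rewrite /pr_viol2; apply: rat_le1; first by rewrite !muln_gt0 N0.
    by rewrite -cT -mulnA -!card_prod; apply: max_card.
- move=> x y hx hy; rewrite /Num.min; case: ifP => //.
- move=> S _; rewrite /dist_lin; split.
  + rewrite /pr_viol; apply: rat_bound1 => //.
    by rewrite -cT; apply: count1.
  + rewrite /pr_viol2; apply: rat_bound2 => //.
    rewrite -cT; exact: (@count2 d f S).
Qed.
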